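(* Let $\mathbb{R}^n$ be endowed with the $\ell_1$ norm, let $A\in\mathbb{R}^{m\times n}$ have at least two different columns, and let $f:\mathbb{R}^m\to\mathbb{R}\cup\{\infty\}$ be a differentiable convex function with $\mathrm{conv}(A)\subseteq\mathrm{dom}(f)$ and $\frac{L_{f,A}}{\mu^\star_{f,A}}<\infty$. Consider the Frank–Wolfe algorithm with away steps (described below) with step sizes $\alpha_k=\min\left\{\alpha_{\max},-\frac{\langle\nabla f(u_k),v\rangle}{4L_{f,A}}\right\}$. If $x_0$ is a vertex of $\Delta_{n-1}$, then for all $k\ge0$ \[ f(u_k)-f^\star\le\left(1-\min\left\{\frac{\mu^\star_{f,A}}{16L_{f,A}},\frac12\right\}\right)^{k/2}(f(u_0)-f^\star). \]
   Context: $\Delta_{n-1}=\{x\in\mathbb{R}^n_+:\sum_ix_i=1\}$, $e_i$ standard basis vectors, $a_1,\dots,a_n$ the columns of $A$, $\mathrm{conv}(A)=\{Ax:x\in\Delta_{n-1}\}$; for $x\in\Delta_{n-1}$, $I(x)=\{i:x_i>0\}$. For $u\in\mathrm{conv}(A)$, $Z(u)=\{z\in\Delta_{n-1}:Az=u\}$, $\mathrm{dist}(x,Z(u))=\min_{z\in Z(u)}\|x-z\|_1$, and $L_{f,A}=\sup_{u\in\mathrm{conv}(A),\,x\in\Delta_{n-1}\setminus Z(u)}\frac{2(f(Ax)-f(u)-\langle\nabla f(u),Ax-u\rangle)}{\mathrm{dist}(x,Z(u))^2}$. $f^\star=\min_{x\in\Delta_{n-1}}f(Ax)$, $Z^\star=\{z\in\Delta_{n-1}:f(Az)=f^\star\}$,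 $\mu^\star_{f,A}=\inf_{x\in\Delta_{n-1}\setminus Z^\star}\frac{2(f(Ax)-f^\star)}{\mathrm{dist}(x,Z^\star)^2}$ with $\mathrm{dist}(x,Z^\star)=\min_{z\in Z^\star}\|x-z\|_1$. Algorithm: pick $x_0\in\Delta_{n-1}$, $u_0=Ax_0$. For $k=0,1,\dots$: let $j\in\operatorname{argmin}_{i}\langle\nabla f(u_k),a_i\rangle$, $\ell\in\operatorname{argmax}_{i\in I(x_k)}\langle\nabla f(u_k),a_i\rangle$. If $\langle\nabla f(u_k),a_j-u_k\rangle<\langle\nabla f(u_k),u_k-a_\ell\rangle$ or $|I(x_k)|=1$, set $v=a_j-u_k$, $w=e_j-x_k$, $\alpha_{\max}=1$; otherwise set $v=u_k-a_\ell$, $w=x_k-e_\ell$, $\alpha_{\max}=\frac{\langle e_\ell,x_k\rangle}{1-\langle e_\ell,x_k\rangle}$. Then $x_{k+1}=x_k+\alpha_kw$, $u_{k+1}=u_k+\alpha_kv=Ax_{k+1}$. *)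

(* Defs.v *)
From HB Require Import structures.
From mathcomp Require Import all_boot all_order all_algebra.
From mathcomp Require Import all_classical all_reals.
From mathcomp Require Import constructive_ereal ereal topology normedtype derive exp.
Unset Printing Implicit Defensive.
Import Order.TTheory GRing.Theory Num.Theory.
Import numFieldNormedType.Exports.
Local Open Scope classical_set_scope.
Local Open Scope ring_scope.

Section Defs.
Context {R : realType}.

Definition norm1 {n : nat} (x : 'cV[R]_n) : R := \sum_(i < n) `|x i 0|.

Definition simplex (n : nat) : set 'cV[R]_n :=
  [set x | (forall i, 0 <= x i 0) /\ \sum_(i < n) x i 0 = 1].

Definition e_ {n : nat} (i : 'I_n) : 'cV[R]_n := delta_mx i 0.

Definition convA {m n : nat} (A : 'M[R]_(m, n)) : set 'cV[R]_m :=
  [set A *m x | x in simplex n].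

Definition supp {n : nat} (x : 'cV[R]_n) : {set 'I_n} := [set i | 0 < x i 0].

Definition Zset {m n : nat} (A : 'M[R]_(m, n)) (u : 'cV[R]_m) : set 'cV[R]_n :=
  [set z | simplex n z /\ A *m z = u].

(* dist(x, Z) = min_{z in Z} ||x - z||_1 (written as an infimum; the minimum
   is attained for the closed polyhedral sets Z used below) *)
Definition dist1 {n : nat} (x : 'cV[R]_n) (Z : set 'cV[R]_n) : R :=
  inf [set norm1 (x - z) | z in Z].

(* <grad f(u), h>  is the differential of f at u applied to h *)
Definition L_fA {m n : nat} (f : 'cV[R]_m -> R) (A : 'M[R]_(m, n)) : \bar R :=
  ereal_sup [set ((2 * (f (A *m ux.2) - f ux.1 - 'd f (ux.1) (A *m ux.2 - ux.1)))
                   / (dist1 ux.2 (Zset A ux.1)) ^+ 2)%:E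
            | ux in [set ux : 'cV[R]_m * 'cV[R]_n |
                      convA A ux.1 /\ simplex n ux.2 /\ ~ Zset A ux.1 ux.2]].

Definition fstar {m n : nat} (f : 'cV[R]_m -> R) (A : 'M[R]_(m, n)) : R :=
  inf [set f (A *m x) | x in simplex n].

Definition Zstar {m n : nat} (f : 'cV[R]_m -> R) (A : 'M[R]_(m, n)) : set 'cV[R]_n :=
  [set z | simplex n z /\ f (A *m z) = fstar f A].

Definition mu_fA {m n : nat} (f : 'cV[R]_m -> R) (A : 'M[R]_(m, n)) : \bar R :=
  ereal_inf [set ((2 * (f (A *m x) - fstar f A)) / (dist1 x (Zstar f A)) ^+ 2)%:E
            | x in [set x | simplex n x /\ ~ Zstar f A x]].

(* One iteration of Frank-Wolfe with away steps, with the step size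
   alpha_k = min {alpha_max, - <grad f(u_k), v> / (4 L)}, as a relation
   between x_k and x_{k+1} (any choice of j in argmin, l in argmax allowed). *)
Definition afw_step {m n : nat} (f : 'cV[R]_m -> R) (A : 'M[R]_(m, n))
    (L : R) (xk xk1 : 'cV[R]_n) : Prop :=
  let uk := A *m xk in
  let g := 'd f uk in
  exists (j l : 'I_n),
    (forall i, g (col j A) <= g (col i A)) /\
    l \in supp xk /\ (forall i, i \in supp xk -> g (col i A) <= g (col l A)) /\
    if (g (col j A - uk) < g (uk - col l A)) || (#|supp xk| == 1)%N then
      let v := col j A - uk in
      let w := e_ j - xk in
      let amax : R := 1 in
      xk1 = xk + Num.min amax (- g v / (4 * L)) *: w
    else
      let v := uk - col l A in
      let w := xk - e_ l in
      let amax := xk l 0 / (1 - xk l 0) in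
      xk1 = xk + Num.min amax (- g v / (4 * L)) *: w.

End Defs.

(* Main.v *)
Require Import Defs.
From HB Require Import structures.
From mathcomp Require Import all_boot all_order all_algebra.
From mathcomp Require Import all_classical all_reals.
From mathcomp Require Import constructive_ereal ereal topology normedtype derive exp.
Import Order.TTheory GRing.Theory Num.Theory.
Import numFieldNormedType.Exports.
Local Open Scope classical_set_scope.
Local Open Scope ring_scope.
From mathcomp Require Import ring lra zify.

Section S.
Variable R : realType.

Lemma mulmx_cols m n (A : 'M[R]_(m, n)) (x : 'cV[R]_n) :
  A *m x = \sum_(i < n) x i 0 *: col i A.
Proof.
apply/matrixP => r c; rewrite !mxE summxE; apply: eq_bigr => i _.
by rewrite !mxE (ord1 c) mulrC.
Qed.

Lemma lin_mulmx m n (A : 'M[R]_(m, n)) (g : {linear 'cV[R]_m -> R^o}) x :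
  g (A *m x) = \sum_(i < n) x i 0 * g (col i A).
Proof. by rewrite mulmx_cols linear_sum; apply: eq_bigr => i _; rewrite linearZ. Qed.

Lemma grad_ineq m (f : 'cV[R]_m -> R) (S : set 'cV[R]_m) u y :
  (forall u v (t : R), S u -> S v -> 0 <= t <= 1 ->
     f ((1 - t) *: u + t *: v) <= (1 - t) * f u + t * f v) ->
  differentiable f u -> S u -> S y -> 'd f u (y - u) <= f y - f u.
Proof.
move=> cvx df Su Sy.
rewrite -deriveE //.
have D := @diff_derivable _ _ _ f u (y - u) df.
rewrite /derive (cvg_at_rightE _ _ D).
apply: limr_le; first exact: cvgP (cvg_dnbhs_at_right D).
near=> t.
have t0 : 0 < t by near: t; exact: nbhs_right_gt.
have t1 : t <= 1 by near: t; exact: nbhs_right_le.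
rewrite /= /shift.
have -> : t *: (y - u) + u = (1 - t) *: u + t *: y.
  by rewrite scalerBr scalerBl scale1r addrC addrA addrAC.
have := cvx u y t Su Sy; rewrite (ltW t0) t1 => /(_ isT) H.
rewrite -[_ *: _]/(t^-1 * _) ler_pdivrMl // mulrBr.
lra.
Unshelve. all: by end_near.
Qed.

Lemma good1 (L M G gv h h' : R) : 0 <= L -> 0 < M -> 0 <= G -> G <= - (2 * gv) ->
  0 <= h -> 2 * M * h <= G ^+ 2 ->
  h' <= h + (- gv / (4 * L)) * gv + 2 * L * (- gv / (4 * L)) ^+ 2 ->
  h' <= (1 - M / (16 * L)) * h.
Proof.
move=> L0 M0 G0 Ggv h0 hG.
have [->|Lp] := eqVneq L 0.
  by rewrite !(mulr0, invr0, mul0r, addr0, subr0, mul1r).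
have Lpos : 0 < L by rewrite lt0r Lp.
rewrite -addrA.
have -> : - gv / (4 * L) * gv + 2 * L * (- gv / (4 * L)) ^+ 2 = - ((2 * gv ^+ 2) / (16 * L)).
  by field; rewrite Lp.
have -> : (1 - M / (16 * L)) * h = h - (M * h) / (16 * L) by field; rewrite Lp.
move=> H; apply: (le_trans H); rewrite lerD2l lerN2.
apply: ler_wpM2r; first by rewrite invr_ge0; lra.
nra.
Qed.

Lemma good2 (L gv h h' : R) : 0 <= L -> ~ (- gv / (4 * L) <= 1) ->
  0 <= h -> h <= - gv -> h' <= h + gv + 2 * L -> h' <= h / 2.
Proof.
move=> L0 hn h0 hgv H.
have [L00|Lp] := eqVneq L 0.
  by exfalso; apply: hn; rewrite L00 mulr0 invr0 mulr0.
have Lpos : 0 < L by rewrite lt0r Lp.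
have : 1 < - gv / (4 * L) by rewrite ltNge; apply/negP.
rewrite ltr_pdivlMr; last lra.
lra.
Qed.

Lemma descent_real (L a gv h h' : R) : 0 <= a -> a <= - gv / (4 * L) -> 0 <= L ->
  0 <= - gv -> h' <= h + a * gv + 2 * L * a ^+ 2 -> h' <= h.
Proof.
move=> a0 aL L0 gv0 H.
have [L00|Lp] := eqVneq L 0.
  move: H; rewrite L00 mulr0 mul0r addr0 => H; apply: (le_trans H); nra.
have Lpos : 0 < L by rewrite lt0r Lp.
move: aL; rewrite ler_pdivlMr; last lra.
move=> aL; apply: (le_trans H); nra.
Qed.

Lemma mu_real (M G h d : R) : 0 < M -> 0 <= G -> 0 <= h -> 0 < d ->
  M * d ^+ 2 <= 2 * h -> 2 * h <= G * d -> 2 * M * h <= G ^+ 2.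
Proof.
move=> M0 G0 h0 d0 H1 H2.
have Md : M * d <= G.
  have : M * d * d <= G * d by rewrite -mulrA -expr2; lra.
  by rewrite ler_pM2r.
have : M * (2 * h) <= M * (G * d) by apply: ler_wpM2l; lra.
have : M * (G * d) <= G ^+ 2 by rewrite mulrCA expr2; apply: ler_wpM2l.
lra.
Qed.

Lemma e_E n (j i : 'I_n) : (@e_ R n j) i 0 = (i == j)%:R.
Proof. by rewrite /e_ mxE eqxx andbT. Qed.

Lemma simplex_e n (j : 'I_n) : simplex n (@e_ R n j).
Proof.
split=> [i|]; first by rewrite e_E ler0n.
rewrite (bigD1 j) //= e_E eqxx big1 ?addr0 // => i /negbTE hij.
by rewrite e_E hij.
Qed.

Lemma supp_e n (j : 'I_n) : supp (@e_ R n j) = [set j]%SET.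
Proof.
apply/setP => i; rewrite !inE e_E.
by case: (i == j); rewrite ?ltr01 ?ltxx.
Qed.

Lemma simplex_le1 n (x : 'cV[R]_n) i : simplex _ x -> x i 0 <= 1.
Proof.
case=> x0 <-; rewrite (bigD1 i) //= lerDl; exact: sumr_ge0.
Qed.

Lemma norm1_ge0 n (x : 'cV[R]_n) : 0 <= norm1 x.
Proof. exact: sumr_ge0. Qed.

Lemma norm1Z n a (w : 'cV[R]_n) : norm1 (a *: w) = `|a| * norm1 w.
Proof. by rewrite /norm1 mulr_sumr; apply: eq_bigr => i _; rewrite mxE normrM. Qed.

Lemma norm1_simplex n (x y : 'cV[R]_n) : simplex _ x -> simplex _ y -> norm1 (x - y) <= 2.
Proof.
case=> x0 sx [y0 sy].
have -> : 2 = \sum_(i < n) (x i 0 + y i 0) by rewrite big_split /= sx sy.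
apply: ler_sum => i _; rewrite !mxE.
apply: (le_trans (ler_normB _ _)).
by rewrite !ger0_norm.
Qed.

Lemma sum_upd n (x y z : 'cV[R]_n) a :
  \sum_(i < n) (x + a *: (y - z)) i 0 =
  \sum_(i < n) x i 0 + a * (\sum_(i < n) y i 0 - \sum_(i < n) z i 0).
Proof.
rewrite -sumrB mulr_sumr -big_split /=; apply: eq_bigr => i _.
by rewrite !mxE.
Qed.

Lemma upd_E n (x y z : 'cV[R]_n) a i :
  (x + a *: (y - z)) i 0 = x i 0 + a * (y i 0 - z i 0).
Proof. by rewrite !mxE. Qed.

Lemma simplex_card n (x : 'cV[R]_n) : simplex _ x -> (0 < #|supp x|)%N.
Proof.
case=> x0 sx; apply/card_gt0P.
have : \sum_(i < n) x i 0 <> 0 by rewrite sx; apply/eqP; exact: oner_neq0.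
case/psumr_neq0P => // i /andP[_ hi].
by exists i; rewrite inE.
Qed.

Section Main.
Variables (m n : nat) (A : 'M[R]_(m, n)) (f : 'cV[R]_m -> R).
Hypothesis hcols : exists i j : 'I_n, col i A != col j A.
Hypothesis hdiff : forall u, convA A u -> differentiable f u.
Hypothesis hcvx : forall u v (t : R), convA A u -> convA A v -> 0 <= t <= 1 ->
     f ((1 - t) *: u + t *: v) <= (1 - t) * f u + t * f v.
Hypothesis hLfin : (L_fA f A < +oo)%E.
Hypothesis hmu : (0 < mu_fA f A)%E.

Lemma convA_mul x : simplex n x -> convA A (A *m x).
Proof. by move=> sx; exists x. Qed.
Arguments convA_mul [x].

Lemma gradA x y : simplex n x -> simplex n y ->
  'd f (A *m x) (A *m y - A *m x) <= f (A *m y) - f (A *m x).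
Proof.
move=> sx sy; have := @grad_ineq m f (convA A) (A *m x) (A *m y) hcvx (hdiff _ (convA_mul sx)) (convA_mul sx) (convA_mul sy). exact.
Qed.
Arguments gradA [x y].

Definition Lr := fine (L_fA f A).

Lemma L_fin : L_fA f A = Lr%:E /\ 0 <= Lr.
Proof.
case: hcols => i [j hij].
rewrite /L_fA; set S := (X in ereal_sup X). rewrite -/(L_fA f A).
have Sel : S ((2 * (f (A *m e_ j) - f (col i A) - 'd f (col i A) (A *m e_ j - col i A)))
                   / (dist1 (e_ j) (Zset A (col i A))) ^+ 2)%:E.
  exists (col i A, e_ j) => //=; split; last split.
  - by rewrite colE; exact: convA_mul (simplex_e _ i).
  - exact: simplex_e.
  - by case=> _; rewrite /e_ -colE => /eqP; rewrite eq_sym (negbTE hij).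
have ge0 : (0 <= L_fA f A)%E.
  apply: le_trans (ereal_sup_ubound Sel); rewrite lee_fin.
  apply: divr_ge0; last exact: sqr_ge0.
  apply: mulr_ge0 => //; rewrite subr_ge0 -subr_ge0 /=.
  rewrite colE. have := gradA (simplex_e _ i) (simplex_e _ j). rewrite /e_. lra.
have fin : L_fA f A \is a fin_num by rewrite ge0_fin_numE.
split; first by rewrite /Lr fineK.
by rewrite /Lr fine_ge0.
Qed.

Lemma descL x x' : simplex n x -> simplex n x' ->
  f (A *m x') - f (A *m x) - 'd f (A *m x) (A *m x' - A *m x) <= Lr / 2 * norm1 (x' - x) ^+ 2.
Proof.
move=> sx sx'; have [Lr_eq Lr0] := L_fin.
set u := A *m x.
set D := [set norm1 (x' - z) | z in Zset A u].
have Dlb : has_lbound D by exists 0 => _ [z _ <-]; exact: norm1_ge0.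
have Dne : D !=set0 by exists (norm1 (x' - x)); exists x.
have d_le : dist1 x' (Zset A u) <= norm1 (x' - x) by apply: ge_inf => //; exists x.
have d_ge0 : 0 <= dist1 x' (Zset A u) by apply: lb_le_inf => // _ [z _ <-]; exact: norm1_ge0.
have [Eq|Neq] := eqVneq (A *m x') u.
  rewrite Eq !subrr linear0 subrr; apply: mulr_ge0; [lra| exact: sqr_ge0].
have d_gt0 : 0 < dist1 x' (Zset A u).
  rewrite lt_neqAle d_ge0 andbT eq_sym; apply/negP => /eqP d0.
  case: (pselect (exists r, (A *m x') r 0 != u r 0)) => [[r hr]|H]; last first.
    move/eqP: Neq; apply; apply/matrixP => r c; rewrite (ord1 c); apply/eqP.
    by apply/negPn/negP => hr; apply: H; exists r.
  set K := 1 + \sum_(i < n) `|A r i|.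
  have K0 : 0 < K.
    have : 0 <= \sum_(i < n) `|A r i| by apply: sumr_ge0.
    rewrite /K; lra.
  have AK i : `|A r i| <= K.
    have : `|A r i| <= \sum_(i0 < n) `|A r i0|.
      by rewrite (bigD1 i) //= lerDl; apply: sumr_ge0.
    rewrite /K; lra.
  have bnd z : Zset A u z -> `|(A *m x') r 0 - u r 0| <= K * norm1 (x' - z).
    case=> _ Az; rewrite -Az.
    have -> : (A *m x') r 0 - (A *m z) r 0 = (A *m (x' - z)) r 0 by rewrite mulmxBr !mxE.
    rewrite mxE /norm1 mulr_sumr; apply: (le_trans (ler_norm_sum _ _ _)).
    apply: ler_sum => i _; rewrite normrM; apply: ler_wpM2r => //.
  have e0 : 0 < `|(A *m x') r 0 - u r 0| by rewrite normr_gt0 subr_eq0.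
  have : `|(A *m x') r 0 - u r 0| / K <= dist1 x' (Zset A u).
    apply: lb_le_inf => // _ [z hz <-]; rewrite ler_pdivrMr // mulrC; exact: bnd.
  rewrite d0 => H.
  have : 0 < `|(A *m x') r 0 - u r 0| / K by apply: divr_gt0.
  lra.
have : (((2 * (f (A *m x') - f u - 'd f u (A *m x' - u))) / (dist1 x' (Zset A u)) ^+ 2)%:E <= L_fA f A)%E.
  apply: ereal_sup_ubound; exists (u, x') => //=; split; first exact: convA_mul sx.
  by split => //; case=> _ /eqP; rewrite (negbTE Neq).
rewrite Lr_eq lee_fin ler_pdivrMr; last exact: exprn_gt0.
move=> H.
have dN : dist1 x' (Zset A u) ^+ 2 <= norm1 (x' - x) ^+ 2 by nra.
have := ler_wpM2l Lr0 dN.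
lra.
Qed.

Definition fs := fstar f A.

Lemma gAy u y : 'd f u (A *m y) = \sum_(i < n) y i 0 * 'd f u (col i A).
Proof. exact: lin_mulmx. Qed.

Lemma lb_fstar {x j} : simplex n x ->
  (forall i, 'd f (A *m x) (col j A) <= 'd f (A *m x) (col i A)) ->
  forall y, simplex n y ->
  f (A *m x) + 'd f (A *m x) (col j A) - 'd f (A *m x) (A *m x) <= f (A *m y).
Proof.
move=> sx hj y sy; have := gradA sx sy; rewrite linearB /=.
have : 'd f (A *m x) (col j A) <= 'd f (A *m x) (A *m y).
  rewrite gAy; case: sy => y0 sy.
  have -> : 'd f (A *m x) (col j A) = \sum_(i < n) y i 0 * 'd f (A *m x) (col j A).
    by rewrite -mulr_suml sy mul1r.
  by apply: ler_sum => i _; apply: ler_wpM2l.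
lra.
Qed.

Lemma fstar_props {x j} : simplex n x ->
  (forall i, 'd f (A *m x) (col j A) <= 'd f (A *m x) (col i A)) ->
  [/\ forall y, simplex n y -> fs <= f (A *m y) &
      f (A *m x) + 'd f (A *m x) (col j A) - 'd f (A *m x) (A *m x) <= fs].
Proof.
move=> sx hj; have lb := lb_fstar sx hj.
have hl : has_lbound [set f (A *m y) | y in simplex n].
  by exists (f (A *m x) + 'd f (A *m x) (col j A) - 'd f (A *m x) (A *m x)) => _ [y sy <-]; exact: lb.
split.
  by move=> y sy; apply: ge_inf => //; exists y.
by apply: lb_le_inf; [exists (f (A *m x)); exists x | move=> _ [y sy <-]; exact: lb].
Qed.

Lemma comb {x z l j} : simplex n x -> simplex n z -> l \in supp x ->
  (forall i, i \in supp x -> 'd f (A *m x) (col i A) <= 'd f (A *m x) (col l A)) ->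
  (forall i, 'd f (A *m x) (col j A) <= 'd f (A *m x) (col i A)) ->
  'd f (A *m x) (A *m (x - z)) <=
    ('d f (A *m x) (col l A) - 'd f (A *m x) (col j A)) / 2 * norm1 (x - z).
Proof.
move=> [x0 sx] [z0 sz] hl hlm hj.
set c := fun i => 'd f (A *m x) (col i A).
rewrite gAy -/c.
have st : \sum_(i < n) (x - z) i 0 = 0.
  by under eq_bigr do rewrite !mxE; rewrite sumrB sx sz subrr.
have -> : \sum_(i < n) (x - z) i 0 * c i = \sum_(i < n) (x - z) i 0 * (c i - c j).
  under [RHS]eq_bigr do rewrite mulrBr.
  by rewrite sumrB -mulr_suml st mul0r subr0.
have -> : (c l - c j) / 2 * norm1 (x - z) =
   \sum_(i < n) (c l - c j) / 2 * (`|(x - z) i 0| + (x - z) i 0).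
  by rewrite -mulr_sumr big_split /= st addr0.
apply: ler_sum => i _.
have cij := hj i.
have [tp|tn] := ltP 0 ((x - z) i 0).
  have : i \in supp x.
    move: tp; rewrite !mxE inE => tp; have := z0 i; lra.
  move=> /hlm; rewrite -/c => cil.
  rewrite (gtr0_norm tp). rewrite -/c in cij. nra.
rewrite (ler0_norm tn). rewrite -/c in cij. nra.
Qed.

Lemma mu_inf : mu_fA f A = +oo%E -> forall y, simplex n y -> f (A *m y) = fs.
Proof.
move/ereal_inf_pinfty => H y sy.
case: (pselect (Zstar f A y)) => [[_ ->]//|nz].
have K : [set +oo%E] ((2 * (f (A *m y) - fstar f A)) / (dist1 y (Zstar f A)) ^+ 2)%:E.
  by apply: H; exists y.
by move: K.
Qed.

Lemma mu_fin : mu_fA f A != +oo%E -> exists M, mu_fA f A = M%:E /\ 0 < M.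
Proof.
move=> hn.
have fin : mu_fA f A \is a fin_num by rewrite ge0_fin_numE ?ltey // ltW.
exists (fine (mu_fA f A)); split; first by rewrite fineK.
by apply: fine_gt0; rewrite hmu ltey.
Qed.

Lemma h_bound {x l j M} : mu_fA f A = M%:E -> 0 < M -> simplex n x -> l \in supp x ->
  (forall i, i \in supp x -> 'd f (A *m x) (col i A) <= 'd f (A *m x) (col l A)) ->
  (forall i, 'd f (A *m x) (col j A) <= 'd f (A *m x) (col i A)) ->
  2 * M * (f (A *m x) - fs) <= ('d f (A *m x) (col l A) - 'd f (A *m x) (col j A)) ^+ 2.
Proof.
move=> hM M0 sx hl hlm hj.
have [fsle lefs] := fstar_props sx hj.
set h := f (A *m x) - fs.
set G := 'd f (A *m x) (col l A) - 'd f (A *m x) (col j A).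
have h0 : 0 <= h by rewrite /h subr_ge0; exact: fsle.
have G0 : 0 <= G by rewrite /G subr_ge0.
case: (pselect (Zstar f A x)) => [[_ E]|nz].
  by rewrite /h E /fs subrr mulr0 sqr_ge0.
set d := dist1 x (Zstar f A).
have Mle : M <= 2 * h / d ^+ 2.
  rewrite -lee_fin -hM; apply: ereal_inf_lbound; by exists x.
have dn0 : d != 0.
  apply/negP => /eqP d0; move: Mle; rewrite d0 expr0n /= invr0 mulr0; lra.
have Zne : Zstar f A !=set0.
  apply/set0P/negP => /eqP Z0; move/eqP: dn0; apply.
  by rewrite /d /dist1 Z0 image_set0 inf0.
set D := [set norm1 (x - z) | z in Zstar f A].
have Dlb : has_lbound D by exists 0 => _ [z _ <-]; exact: norm1_ge0.
have Dne : D !=set0 by case: Zne => z hz; exists (norm1 (x - z)); exists z.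
have d_ge0 : 0 <= d by apply: lb_le_inf => // _ [z _ <-]; exact: norm1_ge0.
have d_gt0 : 0 < d by rewrite lt_neqAle eq_sym dn0.
have hz z : Zstar f A z -> 2 * h <= G * norm1 (x - z).
  case=> sz fz.
  have := gradA sx sz; rewrite !linearB /= => gz.
  have := comb sx sz hl hlm hj; rewrite mulmxBr linearB /= -/G => cb.
  rewrite /h /fs -fz; lra.
have hGd : 2 * h <= G * d.
  have [G00|Gp] := eqVneq G 0.
    case: Zne => z /hz; rewrite G00 !mul0r //.
  have Gpos : 0 < G by rewrite lt_neqAle eq_sym Gp.
  have : 2 * h / G <= d.
    apply: lb_le_inf => // _ [z /hz hz' <-].
    by rewrite ler_pdivrMr // [_ * G]mulrC.
  by rewrite ler_pdivrMr // [_ * G]mulrC.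
have H1 : M * d ^+ 2 <= 2 * h by move: Mle; rewrite ler_pdivlMr ?exprn_gt0.
have := @mu_real M G h d M0 G0 h0 d_gt0 H1 hGd. lra.
Qed.

Definition rho : R := if mu_fA f A == +oo%E then 2^-1
  else Num.min (fine (mu_fA f A) / (16 * fine (L_fA f A))) 2^-1.

Lemma rho_bounds : 0 <= rho /\ rho <= 2^-1.
Proof.
have [_ Lr0] := L_fin.
rewrite /rho; case: ifP => hinf; first by split => //; rewrite invr_ge0.
have hn : mu_fA f A != +oo%E by rewrite hinf.
have [M [hM M0]] := mu_fin hn.
rewrite hM /=; split.
  rewrite le_min invr_ge0 ler0n andbT; apply: divr_ge0; first exact: ltW.
  rewrite -/Lr; apply: mulr_ge0 => //.
by rewrite ge_min lexx orbT.
Qed.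

Lemma gen_step {x w a amax l j} : simplex n x -> l \in supp x ->
  (forall i, i \in supp x -> 'd f (A *m x) (col i A) <= 'd f (A *m x) (col l A)) ->
  (forall i, 'd f (A *m x) (col j A) <= 'd f (A *m x) (col i A)) ->
  simplex n (x + a *: w) -> 0 <= amax ->
  a = Num.min amax (- 'd f (A *m x) (A *m w) / (4 * Lr)) ->
  'd f (A *m x) (col l A) - 'd f (A *m x) (col j A) <= - (2 * 'd f (A *m x) (A *m w)) ->
  norm1 w <= 2 ->
  [/\ f (A *m (x + a *: w)) - fs <= f (A *m x) - fs,
      (- 'd f (A *m x) (A *m w) / (4 * Lr) <= amax ->
         f (A *m (x + a *: w)) - fs <= (1 - rho) * (f (A *m x) - fs)) &
      (f (A *m x) - fs <= - 'd f (A *m x) (A *m w) -> amax = 1 ->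
         f (A *m (x + a *: w)) - fs <= (1 - rho) * (f (A *m x) - fs))].
Proof.
move=> sx hl hlm hj sx' amax0 ha hG hw.
have [Lr_eq Lr0] := L_fin.
have [fsle lefs] := fstar_props sx hj.
have [rho0 rho2] := rho_bounds.
set gv := 'd f (A *m x) (A *m w) in ha hG *.
set G := 'd f (A *m x) (col l A) - 'd f (A *m x) (col j A) in hG.
have G0 : 0 <= G by rewrite /G subr_ge0.
have gv0 : 0 <= - gv by lra.
have q0 : 0 <= - gv / (4 * Lr) by apply: divr_ge0 => //; lra.
have a0 : 0 <= a by rewrite ha le_min amax0 q0.
have aq : a <= - gv / (4 * Lr) by rewrite ha ge_min lexx orbT.
set h := f (A *m x) - fs.
set h' := f (A *m (x + a *: w)) - fs.
have h0 : 0 <= h by rewrite /h subr_ge0; exact: fsle.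
have upd : h' <= h + a * gv + 2 * Lr * a ^+ 2.
  have D := descL _ _ sx sx'.
  have E1 : A *m (x + a *: w) - A *m x = a *: (A *m w)
    by rewrite mulmxDr -scalemxAr addrAC subrr add0r.
  have E2 : x + a *: w - x = a *: w by rewrite addrAC subrr add0r.
  rewrite E1 E2 linearZ /= norm1Z ger0_norm // -/gv in D.
  have N0 := norm1_ge0 _ w.
  change (a *: gv) with (a * gv) in D.
  have : (a * norm1 w) ^+ 2 <= 4 * a ^+ 2.
    rewrite exprMn mulrC; apply: ler_wpM2r; [exact: sqr_ge0|nra].
  move=> /(ler_wpM2l (_ : 0 <= Lr / 2)) H.
  have := H (divr_ge0 Lr0 (ler0n _ 2)).
  rewrite /h' /h; lra.
have upd1 : - gv / (4 * Lr) <= amax -> h' <= (1 - rho) * h.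
  move=> hq; move: upd; rewrite ha (min_r hq) => upd.
  have [hinf|hn] := eqVneq (mu_fA f A) +oo%E.
    have := mu_inf hinf _ sx; have := mu_inf hinf _ sx'.
    by rewrite /h' /h /fs => -> ->; rewrite !subrr mulr0.
  have [M [hM M0]] := mu_fin hn.
  have hb := h_bound hM M0 sx hl hlm hj; rewrite -/G -/h in hb.
  have := @good1 Lr M G gv h h' Lr0 M0 G0 hG h0 hb upd.
  have : rho <= M / (16 * Lr).
    by rewrite /rho (negbTE hn) hM /= ge_min lexx.
  move=> hr H; apply: (le_trans H); apply: ler_wpM2r => //; lra.
split.
- exact: (@descent_real Lr a gv h h').
- exact: upd1.
- move=> hh am1.
  have [hq|hq] := boolP (- gv / (4 * Lr) <= 1); first by apply: upd1; rewrite am1.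
  move: upd; rewrite ha am1 min_l; last by rewrite ltW // ltNge.
  rewrite mul1r expr1n mulr1 => upd.
  have := @good2 Lr gv h h' Lr0 (fun H => (negP hq) H) h0 hh upd.
  nra.
Qed.

Lemma simplex_single {x : 'cV[R]_n} {l} : simplex n x -> l \in supp x -> (#|supp x| == 1)%N ->
  x = e_ l.
Proof.
move=> [x0 sx] hl /cards1P [k hk].
have kl : k = l by move: hl; rewrite hk inE => /eqP.
have xi0 i : i != l -> x i 0 = 0.
  move=> il; apply/le_anti; rewrite x0 andbT leNgt.
  apply/negP => hi; have : i \in supp x by rewrite inE.
  by rewrite hk inE kl (negbTE il).
have xl1 : x l 0 = 1.
  by rewrite -sx (bigD1 l) //= big1 ?addr0 // => i; exact: xi0.
apply/matrixP => i c; rewrite (ord1 c) e_E.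
by have [->|il] := eqVneq i l; [rewrite xl1 | rewrite xi0].
Qed.

Lemma xl_lt1 {x : 'cV[R]_n} {l} : simplex n x -> l \in supp x -> (#|supp x| != 1)%N ->
  x l 0 < 1.
Proof.
move=> [x0 sx] hl hn.
have : (0 < #|supp x :\ l|)%N.
  move: hn; rewrite (cardsD1 l) hl /=; case: #|_| => //.
case/card_gt0P => i; rewrite !inE => /andP [il xi].
rewrite -sx (bigD1 l) //= (bigD1 i) //=.
have : 0 <= \sum_(i0 < n | (i0 != l) && (i0 != i)) x i0 0 by apply: sumr_ge0.
lra.
Qed.

Lemma Eu (i : 'I_n) : A *m (@e_ R n i) = col i A.
Proof. by rewrite /e_ -colE. Qed.

Lemma step x x' : simplex n x -> afw_step f A Lr x x' ->
  [/\ simplex n x', f (A *m x') - fs <= f (A *m x) - fs &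
    ((#|supp x'| <= #|supp x|.+1)%N /\ f (A *m x') - fs <= (1 - rho) * (f (A *m x) - fs))
    \/ (#|supp x'| < #|supp x|)%N ].
Proof.
move=> sx [j [l [hj [hl [hlm Hif]]]]].
have [Lr_eq Lr0] := L_fin.
have [fsle lefs] := fstar_props sx hj.
have G0 := hj l.
have [x0 sx1] := sx.
move: Hif; case: ifP => hb /= ->.
-
  have Aw : A *m (e_ j - x) = col j A - A *m x by rewrite mulmxBr Eu.
  have hgv : 'd f (A *m x) (col l A) - 'd f (A *m x) (col j A)
             <= - (2 * 'd f (A *m x) (A *m (e_ j - x))).
    rewrite Aw; case/orP: hb => [hb|hb].
      move: hb; rewrite !linearB.
      move: ('d f (A *m x) (col j A)) ('d f (A *m x) (col l A)) ('d f (A *m x) (A *m x)) => cj cl gu.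
      lra.
    have ex := simplex_single sx hl hb.
    move: G0; rewrite ex Eu !linearB.
    move: ('d f (col l A) (col j A)) ('d f (col l A) (col l A)) => cj cl.
    lra.
  set a := Num.min 1 _.
  have ha : a = Num.min 1 (- 'd f (A *m x) (A *m (e_ j - x)) / (4 * Lr)) by rewrite Aw.
  have q0 : 0 <= - 'd f (A *m x) (A *m (e_ j - x)) / (4 * Lr).
    apply: divr_ge0; lra.
  have a0 : 0 <= a by rewrite ha le_min ler01 q0.
  have a1 : a <= 1 by rewrite ha ge_min lexx.
  have sx' : simplex n (x + a *: (e_ j - x)).
    split.
      move=> i; rewrite upd_E e_E; have := x0 i.
      have : 0 <= (i == j)%:R :> R by rewrite ler0n.
      have : (i == j)%:R <= 1 :> R by case: (i == j).
      nra.
    by rewrite sum_upd sx1; case: (simplex_e _ j) => _ ->; rewrite subrr mulr0 addr0.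
  have [dec gd1 gd2] := gen_step sx hl hlm hj sx' ler01 ha hgv (norm1_simplex _ _ _ (simplex_e _ j) sx).
  split => //; left; split.
    have sub : supp (x + a *: (e_ j - x)) \subset (j |: supp x)%SET.
      apply/fintype.subsetP => i; rewrite !inE upd_E e_E.
      have [->|ne] := eqVneq i j; first by move=> _; apply/orP; left; apply/eqP.
      rewrite /= => H; rewrite ltNge; apply/negP => Hle.
      have xi0 : x i 0 = 0 by apply/le_anti; rewrite Hle x0.
      by move: H; rewrite xi0 subrr mulr0 addr0 ltxx.
    apply: (leq_trans (subset_leq_card sub)); rewrite cardsU1.
    by case: (j \notin supp x).
  apply: gd2 => //.
  rewrite Aw linearB; move: lefs.
  move: ('d f (A *m x) (col j A)) ('d f (A *m x) (A *m x)) => cj gu.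
  rewrite /fs; lra.
-
  move/negbT: hb; rewrite negb_or => /andP [hb hn].
  have Aw : A *m (x - e_ l) = A *m x - col l A by rewrite mulmxBr Eu.
  have xl0 : 0 < x l 0 by move: hl; rewrite inE.
  have xl1 := xl_lt1 sx hl hn.
  have am0 : 0 < x l 0 / (1 - x l 0) by apply: divr_gt0; lra.
  have hgv : 'd f (A *m x) (col l A) - 'd f (A *m x) (col j A)
             <= - (2 * 'd f (A *m x) (A *m (x - e_ l))).
    rewrite Aw; move: hb; rewrite -leNgt !linearB.
    move: ('d f (A *m x) (col j A)) ('d f (A *m x) (col l A)) ('d f (A *m x) (A *m x)) => cj cl gu.
    lra.
  set a := Num.min (x l 0 / (1 - x l 0)) _.
  have ha : a = Num.min (x l 0 / (1 - x l 0)) (- 'd f (A *m x) (A *m (x - e_ l)) / (4 * Lr)) by rewrite Aw.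
  have q0 : 0 <= - 'd f (A *m x) (A *m (x - e_ l)) / (4 * Lr).
    apply: divr_ge0; lra.
  have a0 : 0 <= a by rewrite ha le_min (ltW am0) q0.
  have a1 : a <= x l 0 / (1 - x l 0) by rewrite ha ge_min lexx.
  have a1' : a * (1 - x l 0) <= x l 0 by rewrite -ler_pdivlMr //; lra.
  have sx' : simplex n (x + a *: (x - e_ l)).
    split.
      move=> i; rewrite upd_E e_E; have := x0 i.
      case: (boolP (i == l)) => [/eqP ->|ne] /=; first by lra.
      rewrite subr0; nra.
    by rewrite sum_upd sx1; case: (simplex_e _ l) => _ ->; rewrite subrr mulr0 addr0.
  have [dec gd1 gd2] := gen_step sx hl hlm hj sx' (ltW am0) ha hgv (norm1_simplex _ _ _ sx (simplex_e _ l)).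
  have sub : supp (x + a *: (x - e_ l)) \subset supp x.
    apply/fintype.subsetP => i; rewrite !inE upd_E e_E.
    case: (boolP (i == l)) => [/eqP ->|ne] /=; first by move=> _.
    rewrite subr0 => H; rewrite ltNge; apply/negP => Hle.
    have xi0 : x i 0 = 0 by apply/le_anti; rewrite Hle x0.
    by move: H; rewrite xi0 mulr0 addr0 ltxx.
  split => //.
  have [hq|hq] := boolP (- 'd f (A *m x) (A *m (x - e_ l)) / (4 * Lr) <= x l 0 / (1 - x l 0)).
    left; split; last exact: gd1.
    by apply: (leq_trans (subset_leq_card sub)).
  right.
  have aeq : a = x l 0 / (1 - x l 0).
    by rewrite ha min_l // ltW // ltNge.
  have sub' : supp (x + a *: (x - e_ l)) \subset (supp x :\ l)%SET.
    apply/fintype.subsetP => i hi; rewrite in_setD1 (fintype.subsetP sub i hi) andbT.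
    apply/eqP => il; move: hi; rewrite il inE upd_E e_E.
    rewrite (_ : (l == l) = true); last by apply/eqP.
    have nz : 1 - x l 0 != 0 by apply: lt0r_neq0; lra.
    have E : a * (1 - x l 0) = x l 0.
      exact: (etrans (congr1 (fun t => t * (1 - x l 0)) aeq) (mulfVK nz _)).
    have -> : x l 0 + a * (x l 0 - 1%:R) = 0 by lra.
    by rewrite ltxx.
  apply: (leq_ltn_trans (subset_leq_card sub')).
  by rewrite [X in (_ < X)%N](cardsD1 l (supp x)) hl add1n ltnSn.
Qed.

Lemma main_bound (x : nat -> 'cV[R]_n) : (exists i, x 0%N = e_ i) ->
  (forall k, afw_step f A Lr (x k) (x k.+1)) ->
  forall k : nat, f (A *m x k) - fs <= (1 - rho) `^ (k%:R / 2) * (f (A *m x 0%N) - fs).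
Proof.
move=> [i0 hx0] hstep.
have [rho0 rho2] := rho_bounds.
have inv k : simplex n (x k) /\ exists c : nat, (#|supp (x k)| + k <= 1 + 2 * c)%N /\
    f (A *m x k) - fs <= (1 - rho) ^+ c * (f (A *m x 0%N) - fs).
  elim: k => [|k [sk [c [hc hh]]]].
    rewrite hx0; split; first exact: simplex_e.
    by exists 0%N; rewrite supp_e cards1 expr0 mul1r; split.
  have [sk' dec [[hc' hg]|hd]] := step _ _ sk (hstep k).
    split => //; exists c.+1; split; first by lia.
    rewrite exprS -mulrA; apply: (le_trans hg); apply: ler_wpM2l => //; lra.
  by split => //; exists c; split; [lia | exact: le_trans dec hh].
have [sx0 _] := inv 0%N.
have h00 : 0 <= f (A *m x 0%N) - fs.
  have [j [l [hj _]]] := hstep 0%N.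
  have [fsle _] := fstar_props sx0 hj.
  by rewrite subr_ge0; apply: fsle.
move=> k; have [sk [c [hc hh]]] := inv k.
apply: (le_trans hh); apply: ler_wpM2r => //.
have s1 := simplex_card _ _ sk.
have kc : (k <= 2 * c)%N by lia.
rewrite -powR_mulrn; last lra.
apply: ger_powR; first lra.
rewrite ler_pdivrMr // mulrC -natrM ler_nat.
by [].
Qed.

End Main.
End S.

Theorem proposition3 (R : realType) (m n : nat) (A : 'M[R]_(m, n))
    (f : 'cV[R]_m -> R) (x : nat -> 'cV[R]_n) :
  (exists i j : 'I_n, col i A != col j A) ->
  (forall u, convA A u -> differentiable f u) ->
  (forall u v (t : R), convA A u -> convA A v -> 0 <= t <= 1 ->
     f ((1 - t) *: u + t *: v) <= (1 - t) * f u + t * f v) ->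
  (L_fA f A < +oo)%E ->
  (0 < mu_fA f A)%E ->
  (exists i : 'I_n, x 0%N = e_ i) ->
  (forall k, afw_step f A (fine (L_fA f A)) (x k) (x k.+1)) ->
  forall k : nat,
    let rho : R := if mu_fA f A == +oo%E then 2^-1
                   else Num.min (fine (mu_fA f A) / (16 * fine (L_fA f A))) 2^-1 in
    f (A *m x k) - fstar f A <=
      (1 - rho) `^ (k%:R / 2) * (f (A *m x 0%N) - fstar f A).
Proof.
move=> h1 h2 h3 h4 h5 h6 h7 k.
exact: (@main_bound R m n A f h1 h2 h3 h4 h5 x h6 h7 k).
Qed.
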